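(* Let $G$ be an infinite finitely generated residually finite group, $S$ a finite symmetric generating set, and $(X_n)_{n\ge0}$ the lazy random walk on $\mathrm{Cay}(G,S)$. Then $$\liminf_{n\to\infty}\mathbb{E}[D_G(X_n)]\ge 2+\sum_{k\ge2}\frac{1}{[G:\Lambda_k]}.$$
   Context: For $g\ne e$, $D_G(g)=\min\{[G:N]: N\lhd G\text{ of finite index},\ g\notin N\}$, and $D_G(e)=0$. For $k\ge2$, $\Lambda_k$ is the intersection of all normal subgroups of $G$ of index at most $k$; $\Lambda_0=\Lambda_1=G$. The lazy random walk on $\mathrm{Cay}(G,S)$ is the Markov chain with $X_0=e$ and transition matrix $\frac12 I+\frac12P$, where $P(x,y)=\frac1{|S|}\#\{s\in S:y=xs\}$. *)

(* Defs.v *)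
(* Abstract (possibly infinite) groups
   are MathComp's [groupType] from boot/monoid.v. *)
From HB Require Import structures.
From mathcomp Require Import all_boot all_order all_algebra.
From mathcomp Require Import monoid.
From mathcomp Require Import all_classical all_reals all_analysis.
Set Implicit Arguments. Unset Strict Implicit. Unset Printing Implicit Defensive.
Import Order.TTheory GRing.Theory Num.Theory.
Local Open Scope classical_set_scope.

Section GroupDefs.
Variable G : groupType.
Local Open Scope group_scope.

Definition normal_subgroup (N : set G) : Prop :=
  [/\ N 1, (forall x y, N x -> N y -> N (x * y)), (forall x, N x -> N (x^-1))
    & (forall x g, N x -> N (g^-1 * x * g))].

(* [G : N] = m : there are exactly m (right) cosets N r *)
Definition has_index (N : set G) (m : nat) : Prop :=
  exists reps : seq G, [/\ size reps = m,
    (forall g, exists2 r, r \in reps & N (g * r^-1)) &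
    (forall i j, (i < m)%N -> (j < m)%N ->
       N (nth 1 reps i * (nth 1 reps j)^-1) -> i = j)].

Definition finite_index (N : set G) : Prop := exists m, has_index N m.

(* the index [G : N] (only meaningful when N has finite index) *)
Definition gindex (N : set G) : nat := xget 0%N [set m | has_index N m].

Definition Dcand (g : G) (m : nat) : Prop :=
  exists N, [/\ normal_subgroup N, has_index N m & ~ N g].

Definition DG (g : G) : nat :=
  if `[< g = 1 >] then 0%N
  else xget 0%N [set m | Dcand g m /\ (forall m', Dcand g m' -> (m <= m')%N)].

Definition Lambda (k : nat) : set G :=
  if (k <= 1)%N then setT
  else [set x | forall N m, normal_subgroup N -> has_index N m -> (m <= k)%N -> N x].

Definition residually_finite : Prop :=
  forall g : G, g <> 1 -> exists N, [/\ normal_subgroup N, finite_index N & ~ N g].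

(* S (a duplicate-free list, i.e. a finite set) is a symmetric generating set *)
Definition symmetric_gen_set (S : seq G) : Prop :=
  [/\ uniq S, (forall s, s \in S -> s^-1 \in S) &
      (forall g : G, exists w : seq G, all (mem S) w /\ g = foldr mul 1 w)].

Definition walk_pos (S : seq G) (n : nat) (t : n.-tuple (option 'I_(size S))) : G :=
  foldl (fun x (o : option 'I_(size S)) => match o with None => x | Some j => x * nth 1 S j end) 1 t.

End GroupDefs.

Section Walk.
Variable R : realType.
Local Open Scope ring_scope.

Definition lazy_step_prob (G : groupType) (S : seq G) (o : option 'I_(size S)) : R :=
  match o with None => 2^-1 | Some _ => (2 * (size S)%:R)^-1 end.

(* E[D_G(X_n)] for the lazy random walk X on Cay(G,S) started at X_0 = 1 *)
Definition expected_DG (G : groupType) (S : seq G) (n : nat) : R :=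
  \sum_(t : n.-tuple (option 'I_(size S)))
     (\prod_(i < n) @lazy_step_prob G S (tnth t i)) * (DG (walk_pos t))%:R.
End Walk.

(* Main.v *)
Require Import Defs.
From HB Require Import structures.
From mathcomp Require Import all_boot all_order all_algebra.
From mathcomp Require Import monoid.
From mathcomp Require Import all_classical all_reals all_analysis.
From mathcomp Require Import ring lra zify.
Set Implicit Arguments. Unset Strict Implicit. Unset Printing Implicit Defensive.
Import Order.TTheory GRing.Theory Num.Theory.
Local Open Scope classical_set_scope.
Local Open Scope ring_scope.
Lemma final_ereal (R : realType) (u a : nat -> R) :
  (forall k, 0 <= a k) ->
  (forall K (e : R), 0 < e -> exists N, forall n, (N <= n)%N ->
      2 + \sum_(2 <= k < K) a k - e <= u n) ->
  ((2%:E + \sum_(2 <= k <oo) (a k)%:E)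
     <= limn_einf (fun n => (u n)%:E))%E.
Proof.
move=> a0 H.
set L := limn_einf _.
have step : forall K, ((2 + \sum_(2 <= k < K) a k)%:E <= L)%E.
  move=> K; apply/lee_subgt0Pr => e e0.
  have [N HN] := H K e e0.
  rewrite /L limn_einf_lim; apply: lime_ge; first exact: is_cvg_einfs.
  exists N => // n /= Nn; apply: le_ereal_inf_tmp => _ [k /= nk <-].
  by rewrite -EFinB lee_fin; apply: HN; apply: leq_trans nk.
have L2 : (2%:E <= L)%E by have := step 2%N; rewrite big_geq // addr0.
case: L L2 step => [l||] //= L2 step; last by rewrite leey.
have -> : (2%:E = (2 : R)%:E)%E by [].
rewrite -leeBrDl //.
apply: lime_le; first by apply: is_cvg_nneseries => n _ _; rewrite lee_fin.
apply: nearW => K /=; rewrite sumEFin -EFinB lee_fin.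
have := step K; rewrite lee_fin; lra.
Qed.
Lemma big_option_sum (R : realType) (I : finType) (F : option I -> R) :
  \sum_(o : option I) F o = F None + \sum_(i : I) F (Some i).
Proof.
rewrite (bigD1 None) //=; congr (_ + _).
rewrite (reindex_omap Some (fun o => o)) /=; last by case.
by apply: eq_bigl => i; rewrite eqxx.
Qed.

Section Walk.
Variables (R : realType) (G : groupType) (S : seq G).
Local Notation T := (option 'I_(size S)).

Definition stepg (x : G) (o : T) : G :=
  match o with None => x | Some j => (x * nth 1%g S j)%g end.
Definition wgt (o : T) : R := lazy_step_prob R o.
Definition W n (t : n.-tuple T) : R := \prod_(i < n) wgt (tnth t i).
Definition E n (f : G -> R) : R := \sum_(t : n.-tuple T) W t * f (walk_pos t).

Lemma expected_E n : expected_DG R S n = E n (fun g => (DG g)%:R).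
Proof. by []. Qed.

Lemma wgt_ge0 o : 0 <= wgt o.
Proof. by case: o => [j|] /=; rewrite invr_ge0 // mulr_ge0. Qed.

Lemma W_ge0 n (t : n.-tuple T) : 0 <= W t.
Proof. by apply: prodr_ge0 => i _; apply: wgt_ge0. Qed.

Lemma sum_wgt : (0 < size S)%N -> \sum_o wgt o = 1.
Proof.
move=> S0; rewrite big_option_sum /= sumr_const card_ord.
have k0 : (size S)%:R != 0 :> R by rewrite pnatr_eq0 -lt0n.
by rewrite -mulr_natr; field.
Qed.

Lemma stepgE x o : stepg x o = (x * stepg 1 o)%g.
Proof. by case: o => [j|] /=; rewrite ?mulg1 ?mul1g. Qed.

Lemma foldl_stepg x (t : seq T) : foldl stepg x t = (x * foldl stepg 1 t)%g.
Proof.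
elim: t x => [|o t IH] x /=; first by rewrite mulg1.
by rewrite IH [in RHS]IH mulgA -stepgE.
Qed.

Lemma walk_posE n (t : n.-tuple T) : walk_pos t = foldl stepg 1%g t.
Proof. by []. Qed.

Lemma sum_tuple_cons n (F : n.+1.-tuple T -> R) :
  \sum_(t : n.+1.-tuple T) F t = \sum_(o : T) \sum_(t : n.-tuple T) F [tuple of o :: t].
Proof.
rewrite pair_big /=.
rewrite (reindex (fun p : T * n.-tuple T => [tuple of p.1 :: p.2])) //=.
exists (fun t => (thead t, [tuple of behead t])).
  by move=> [x y] _ /=; congr (_, _); apply: val_inj.
by move=> t _ /=; rewrite -tuple_eta.
Qed.

Lemma W_cons n o (t : n.-tuple T) : W [tuple of o :: t] = wgt o * W t.
Proof.
rewrite /W big_ord_recl; congr (_ * _); apply: eq_bigr => i _.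
by rewrite tnthS.
Qed.

Lemma E0 f : E 0 f = f 1%g.
Proof.
rewrite /E (big_pred1 [tuple]) => [|t]; last by rewrite [t]tuple0 /= eqxx.
by rewrite /W big_ord0 mul1r.
Qed.

Lemma E_cons n f :
  E n.+1 f = \sum_o wgt o * E n (fun g => f (stepg 1 o * g)%g).
Proof.
rewrite /E sum_tuple_cons; apply: eq_bigr => o _; rewrite mulr_sumr.
apply: eq_bigr => t _; rewrite W_cons -mulrA; congr (_ * (_ * f _)).
by rewrite !walk_posE /= foldl_stepg.
Qed.

Lemma E_sum n (I : Type) (r : seq I) (P : pred I) (F : I -> G -> R) :
  E n (fun g => \sum_(i <- r | P i) F i g) = \sum_(i <- r | P i) E n (F i).
Proof.
rewrite /E exchange_big /=; apply: eq_bigr => t _; by rewrite mulr_sumr.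
Qed.

Lemma E_scale n c f : E n (fun g => c * f g) = c * E n f.
Proof. rewrite /E mulr_sumr; apply: eq_bigr => t _; by rewrite mulrCA. Qed.

Lemma E_add n f h : E n (fun g => f g + h g) = E n f + E n h.
Proof. rewrite /E -big_split; apply: eq_bigr => t _ /=; by rewrite mulrDr. Qed.

Lemma E_sub n f h : E n (fun g => f g - h g) = E n f - E n h.
Proof. rewrite /E -sumrB; apply: eq_bigr => t _ /=; by rewrite mulrBr. Qed.

Lemma E_le n f h : (forall g, f g <= h g) -> E n f <= E n h.
Proof.
move=> fh; apply: ler_sum => t _; apply: ler_wpM2l; [exact: W_ge0|exact: fh].
Qed.

Lemma E_ext n f h : (forall g, f g = h g) -> E n f = E n h.
Proof. by move=> fh; apply: eq_bigr => t _; rewrite fh. Qed.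

Lemma E_rcons n f :
  E n.+1 f = E n (fun g => \sum_o wgt o * f (stepg g o)).
Proof.
elim: n f => [|n IH] f.
  rewrite E_cons E0; apply: eq_bigr => o _; by rewrite E0 mulg1.
rewrite E_cons [in RHS]E_cons; apply: eq_bigr => o _; rewrite IH.
congr (_ * _); apply: E_ext => g; apply: eq_bigr => o' _.
by rewrite [stepg (_ * _)%g _]stepgE [stepg g _]stepgE mulgA.
Qed.

Lemma E1 n : (0 < size S)%N -> E n (fun _ => 1) = 1.
Proof.
move=> S0; elim: n => [|n IH]; first by rewrite E0.
rewrite E_cons -[RHS](sum_wgt S0); apply: eq_bigr => o _; by rewrite IH mulr1.
Qed.

End Walk.

Lemma geom_small (R : realType) (q e : R) : 0 <= q < 1 -> 0 < e -> exists k, q ^+ k <= e.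
Proof.
move=> /andP[q0 q1] e0.
have hq : `|q| < 1 by rewrite ger0_norm.
have := (proj1 (cvgr0Pnorm_lt _) (cvg_expr hq)) e e0.
move=> [N _ HN]; exists N; have := HN N (leqnn N) => /=.
rewrite ger0_norm ?exprn_ge0 //; exact: ltW.
Qed.

Lemma le_sum_term (R : realType) (I : finType) (F : I -> R) i :
  (forall j, 0 <= F j) -> F i <= \sum_j F j.
Proof. by move=> F0; rewrite (bigD1 i) //= lerDl sumr_ge0. Qed.

Lemma sum_ind (R : realType) (I : finType) (a : I) (c : I -> R) :
  \sum_x c x * (a == x)%:R = c a.
Proof.
rewrite (bigD1 a) //= eqxx mulr1 big1 ?addr0 // => x xa.
by rewrite eq_sym (negbTE xa) mulr0.
Qed.

Lemma argmax_fin (R : realType) (I : finType) (f : I -> R) (x0 : I) :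
  exists x, forall y, f y <= f x.
Proof.
have H : forall s : seq I, exists x, forall y, y \in s -> f y <= f x.
  elim=> [|a s [x Hx]]; first by exists x0.
  have [fax|fxa] := leP (f a) (f x).
    exists x => y; rewrite in_cons => /orP[/eqP ->//|]; exact: Hx.
  exists a => y; rewrite in_cons => /orP[/eqP ->//|/Hx fy].
  by apply: le_trans fy (ltW fxa).
have [x Hx] := H (enum I); exists x => y; apply: Hx; exact: mem_enum.
Qed.

Section Coding.
Variables (R : realType) (G : groupType) (S : seq G) (Om : finType) (phi : G -> Om).
Hypothesis Ssym : forall s, s \in S -> (s^-1)%g \in S.
Hypothesis Sgen : forall g : G, exists w : seq G, all (mem S) w /\ g = foldr mul 1%g w.
Hypothesis S0 : (0 < size S)%N.
Hypothesis phi_compat : forall g h (j : 'I_(size S)),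
  phi g = phi h -> phi (g * nth 1%g S j)%g = phi (h * nth 1%g S j)%g.
Hypothesis phi_surj : forall y, exists g, phi g = y.

Local Notation T := (option 'I_(size S)).

Definition pre (x : Om) : G := proj1_sig (cid (phi_surj x)).
Lemma pre_spec x : phi (pre x) = x.
Proof. exact: (proj2_sig (cid (phi_surj x))). Qed.

Definition Fo (o : T) (x : Om) : Om := phi (stepg (pre x) o).

Lemma Fo_phi g o : Fo o (phi g) = phi (stepg g o).
Proof. by case: o => [j|] /=; rewrite /Fo /= ?pre_spec //; apply: phi_compat; rewrite pre_spec. Qed.

Lemma Fo_None x : Fo None x = x.
Proof. exact: pre_spec. Qed.

Definition kk (x y : Om) : R := \sum_o wgt R o * (Fo o x == y)%:R.
Definition Tm (f : Om -> R) : Om -> R := fun y => \sum_x f x * kk x y.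
Definition v n (y : Om) : R := E S n (fun g => (phi g == y)%:R).

Lemma v_succ n : v n.+1 = Tm (v n).
Proof.
apply: funext => y; rewrite /v E_rcons /Tm.
transitivity (E S n (fun g => kk (phi g) y)).
  by apply: E_ext => g; rewrite /kk; apply: eq_bigr => o _; rewrite Fo_phi.
under [RHS]eq_bigr => x _ do rewrite mulrC -E_scale.
rewrite -E_sum; apply: E_ext => g; by rewrite sum_ind.
Qed.

Definition idx (s : G) : 'I_(size S) := insubd (Ordinal S0) (index s S).

Lemma nth_idx s : s \in S -> nth 1%g S (idx s) = s.
Proof. by move=> sS; rewrite val_insubd index_mem sS nth_index. Qed.

Lemma inv_idx (j : 'I_(size S)) : exists j' : 'I_(size S), nth 1%g S j' = (nth 1%g S j)^-1%g.
Proof. by exists (idx (nth 1%g S j)^-1%g); rewrite nth_idx // Ssym // mem_nth. Qed.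

Lemma Fo_cancel (j j' : 'I_(size S)) : nth 1%g S j' = (nth 1%g S j)^-1%g ->
  cancel (Fo (Some j)) (Fo (Some j')).
Proof.
move=> hj x; have [g <-] := phi_surj x.
by rewrite !Fo_phi /= hj -mulgA mulgV mulg1.
Qed.

Lemma Fo_bij o : exists o', cancel (Fo o) (Fo o') /\ cancel (Fo o') (Fo o).
Proof.
case: o => [j|]; last by exists None; split => x; rewrite !Fo_None.
have [j' hj] := inv_idx j; exists (Some j'); split; apply: Fo_cancel => //.
by rewrite hj invgK.
Qed.

Lemma sum_kk_col y : \sum_x kk x y = 1.
Proof.
rewrite /kk exchange_big /= -[RHS](sum_wgt R S0); apply: eq_bigr => o _.
rewrite -mulr_sumr; have [p [c1 c2]] := Fo_bij o.
transitivity (wgt R o * \sum_x (Fo p y == x)%:R).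
  congr (_ * _); apply: eq_bigr => x _.
  have -> // : (Fo o x == y) = (Fo p y == x).
  apply/eqP/eqP => [<-|<-]; by rewrite ?c1 ?c2.
have -> : \sum_x ((Fo p y == x)%:R : R) = 1.
  transitivity (\sum_x (fun=> (1:R)) x * (Fo p y == x)%:R); last exact: sum_ind.
  by apply: eq_bigr => x _; rewrite mul1r.
by rewrite mulr1.
Qed.

Lemma kk_ge0 x y : 0 <= kk x y.
Proof. by apply: sumr_ge0 => o _; rewrite mulr_ge0 ?wgt_ge0. Qed.

Lemma Tm_affine a b f : Tm (fun x => a * f x + b) = fun y => a * Tm f y + b.
Proof.
apply: funext => y; rewrite /Tm.
under eq_bigr do rewrite mulrDl -mulrA.
by rewrite big_split /= -mulr_sumr -mulr_sumr sum_kk_col mulr1.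
Qed.

Lemma Tn_affine n a b f :
  iter n Tm (fun x => a * f x + b) = fun y => a * iter n Tm f y + b.
Proof. by elim: n => [|n IH] //=; rewrite IH Tm_affine. Qed.

Lemma Tm_ge0 f : (forall x, 0 <= f x) -> forall y, 0 <= Tm f y.
Proof. by move=> f0 y; apply: sumr_ge0 => x _; rewrite mulr_ge0 ?kk_ge0. Qed.

Lemma Tn_ge0 n f : (forall x, 0 <= f x) -> forall y, 0 <= iter n Tm f y.
Proof. by move=> f0; elim: n => [|n IH] //=; apply: Tm_ge0. Qed.

Lemma Tm_lb f o x : (forall x, 0 <= f x) -> wgt R o * f x <= Tm f (Fo o x).
Proof.
move=> f0; apply: le_trans (le_sum_term _ _) => [|j]; last by rewrite mulr_ge0 ?kk_ge0.
rewrite mulrC; apply: ler_wpM2l => //.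
have : wgt R o * (Fo o x == Fo o x)%:R <= kk x (Fo o x).
  rewrite /kk; apply: (@le_sum_term R _ (fun o2 => wgt R o2 * (Fo o2 x == Fo o x)%:R) o) => o2.
  by rewrite mulr_ge0 ?wgt_ge0.
by rewrite eqxx mulr1.
Qed.

Definition c1 : R := (2 * (size S)%:R)^-1.

Lemma c1_gt0 : 0 < c1.
Proof. by rewrite invr_gt0 mulr_gt0 // ltr0n. Qed.

Lemma c1_le_half : c1 <= 2^-1.
Proof.
rewrite /c1 invfM ler_piMr ?invr_gt0 // invf_le1 ?ltr0n // ler1n //.
Qed.

Lemma wgt_ge_c1 (o : T) : c1 <= wgt R o.
Proof. by case: o => [j|] //=; exact: c1_le_half. Qed.

Definition Fs (x : Om) (j : 'I_(size S)) : Om := Fo (Some j) x.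

Lemma reach_lb f : (forall x, 0 <= f x) -> forall n (w : seq 'I_(size S)) x,
  (size w <= n)%N -> c1 ^+ n * f x <= iter n Tm f (foldl Fs x w).
Proof.
move=> f0; elim=> [|n IH] w x.
  by rewrite leqn0 => /nilP -> /=; rewrite expr0 mul1r.
case/lastP: w => [|w j] hw.
  rewrite /= exprS -mulrA.
  apply: le_trans (_ : wgt R (None : T) * iter n Tm f x <= _); last first.
    by have := Tm_lb None x (Tn_ge0 n f0); rewrite Fo_None.
  have c10 : 0 <= c1 by apply: ltW; exact: c1_gt0.
  apply: ler_pM => //; first by rewrite mulr_ge0 ?exprn_ge0.
    have h := wgt_ge_c1 None; exact h.
  exact: (IH [::]).
rewrite foldl_rcons /= exprS -mulrA.
apply: le_trans (Tm_lb (Some j) _ (Tn_ge0 n f0)).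
have c10 : 0 <= c1 by apply: ltW; exact: c1_gt0.
apply: ler_pM => //; first by rewrite mulr_ge0 ?exprn_ge0.
by apply: IH; rewrite size_rcons in hw.
Qed.

Lemma walk_word (ws : seq G) g : all (mem S) ws ->
  foldl Fs (phi g) (map idx ws) = phi (g * foldr mul 1%g ws)%g.
Proof.
elim: ws g => [|s ws IH] g /=; first by rewrite mulg1.
move=> /andP[sS hws]; rewrite /Fs Fo_phi /= nth_idx // -/Fs IH //.
by rewrite mulgA.
Qed.

Lemma reach x y : exists w : seq 'I_(size S), foldl Fs x w = y.
Proof.
have [g <-] := phi_surj x; have [h <-] := phi_surj y.
have [ws [Hall Heq]] := Sgen (g^-1 * h)%g.
by exists (map idx ws); rewrite walk_word // -Heq mulVKg.
Qed.

Lemma reach_unif : exists B, forall x y, exists w : seq 'I_(size S),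
  (size w <= B)%N /\ foldl Fs x w = y.
Proof.
have H : forall s : seq (Om * Om), exists B, forall p, p \in s ->
    exists w : seq 'I_(size S), (size w <= B)%N /\ foldl Fs p.1 w = p.2.
  elim=> [|p s [B HB]]; first by exists 0%N.
  have [w hw] := reach p.1 p.2; exists (maxn B (size w)) => q.
  rewrite in_cons => /orP[/eqP ->|/HB [w' [h1 h2]]].
    by exists w; rewrite leq_maxr.
  by exists w'; rewrite (leq_trans h1) ?leq_maxl.
have [B HB] := H (enum {: Om * Om}).
by exists B => x y; apply: (HB (x, y)); rewrite mem_enum.
Qed.


Definition B0 : nat := proj1_sig (cid (reach_unif)).
Definition Bt := B0.+1.
Definition cc : R := c1 ^+ Bt.

Lemma reach_B x y : exists w : seq 'I_(size S), (size w <= Bt)%N /\ foldl Fs x w = y.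
Proof.
have [w [h1 h2]] := proj2_sig (cid (reach_unif)) x y.
by exists w; split => //; apply: leq_trans h1 _; rewrite /Bt /B0.
Qed.

Definition Bd (d : R) (f : Om -> R) := exists lo, forall y, lo <= f y <= lo + d.

Lemma cc_bounds : 0 < cc /\ 2 * cc <= 1.
Proof.
have c0 := c1_gt0; have ch := c1_le_half.
split; first by rewrite exprn_gt0.
rewrite /cc /Bt exprS.
have c1le1 : c1 <= 1 by apply: le_trans ch _; rewrite invf_le1 // ler1n.
have : c1 ^+ B0 <= 1 by apply: exprn_ile1 => //; apply: ltW.
have : 0 <= c1 ^+ B0 by rewrite exprn_ge0 // ltW.
move=> h0 h1.
have : c1 * c1 ^+ B0 <= c1.
  by rewrite -[X in _ <= X]mulr1 ler_wpM2l // ltW.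
have : 2 * 2^-1 = 1 :> R by rewrite mulfV.
move=> h2 h3; lra.
Qed.

Lemma contraction d f : Bd d f -> Bd ((1 - 2 * cc) * d) (iter Bt Tm f).
Proof.
move=> [lo Hlo].
have [xM HM] := argmax_fin f (phi 1%g).
have [xm Hm] := argmax_fin (fun x => - f x) (phi 1%g).
have Hm' : forall y, f xm <= f y by move=> y; have := Hm y; rewrite lerN2.
set M := f xM; set m := f xm.
have hd : M - m <= d.
  by have := Hlo xM; have := Hlo xm; rewrite /M /m => /andP[? ?] /andP[? ?]; lra.
have low : forall y, cc * (M - m) <= iter Bt Tm f y - m.
  move=> y; have [w [hw hy]] := reach_B xM y.
  have g0 : forall x, 0 <= 1 * f x + - m by move=> x; rewrite mul1r subr_ge0.
  have := reach_lb g0 xM hw; rewrite Tn_affine hy mul1r.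
  by rewrite /cc mul1r.
have up : forall y, cc * (M - m) <= M - iter Bt Tm f y.
  move=> y; have [w [hw hy]] := reach_B xm y.
  have g0 : forall x, 0 <= -1 * f x + M.
    by move=> x; rewrite mulN1r addrC subr_ge0; apply: HM.
  have := reach_lb g0 xm hw; rewrite Tn_affine hy !mulN1r => h.
  by rewrite /cc /M /m in h *; lra.
have [c0 c2] := cc_bounds.
have hd' : (1 - 2 * cc) * (M - m) <= (1 - 2 * cc) * d.
  by apply: ler_wpM2l => //; lra.
exists (m + cc * (M - m)) => y; apply/andP; split.
  by have := low y; lra.
by have := up y; lra.
Qed.

Lemma v_iter m n : v (m + n) = iter m Tm (v n).
Proof. by elim: m => [|m IH] //=; rewrite addSn v_succ IH. Qed.

Lemma v_bd0 n : Bd 1 (v n).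
Proof.
exists 0 => y; rewrite add0r; apply/andP; split.
  have -> : (0 : R) = E S n (fun _ => 0 * 1) by rewrite E_scale mul0r.
  by apply: E_le => g; rewrite mul0r.
rewrite -(E1 R n S0); apply: E_le => g; by rewrite lern1 leq_b1.
Qed.

Lemma v_bd k n : (k * Bt <= n)%N -> Bd ((1 - 2 * cc) ^+ k) (v n).
Proof.
elim: k n => [|k IH] n hn; first by rewrite expr0; apply: v_bd0.
rewrite mulSn in hn.
have -> : n = (Bt + (n - Bt))%N by rewrite subnKC // (leq_trans _ hn) // leq_addr.
rewrite v_iter exprS; apply: contraction; apply: IH.
by rewrite leq_subRL // (leq_trans _ hn) // leq_addr.
Qed.

Lemma v_sum n : \sum_y v n y = 1.
Proof.
transitivity (E S n (fun g => \sum_y ((phi g == y)%:R : R))); first by rewrite E_sum.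
rewrite -[RHS](E1 R n S0); apply: E_ext => g.
transitivity (\sum_y (fun=> (1:R)) y * (phi g == y)%:R); last exact: sum_ind.
by apply: eq_bigr => y _; rewrite mul1r.
Qed.

Theorem v_lim y e : 0 < e -> exists N, forall n, (N <= n)%N ->
  `|v n y - (#|Om|%:R)^-1| <= e.
Proof.
move=> e0; have [c0 c2] := cc_bounds.
have [k hk] := @geom_small R (1 - 2 * cc) e (ltac:(apply/andP; split; lra)) e0.
exists (k * Bt)%N => n hn.
have [lo Hlo] := v_bd hn.
have Om0 : (0 < #|Om|)%N by apply/card_gt0P; exists (phi 1%g).
set K := (#|Om|%:R : R).
have K0 : 0 < K by rewrite ltr0n.
have hsum := v_sum n.
have h1 : K * lo <= 1.
  have : \sum_(z : Om) lo <= \sum_z v n z.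
    by apply: ler_sum => z _; have /andP[] := Hlo z.
  by rewrite hsum sumr_const /K mulr_natl; move=> h; exact: h.
have h2 : 1 <= K * (lo + (1 - 2 * cc) ^+ k).
  have : \sum_z v n z <= \sum_(z : Om) (lo + (1 - 2 * cc) ^+ k).
    by apply: ler_sum => z _; have /andP[] := Hlo z.
  by rewrite hsum sumr_const -[(lo + _) *+ _]mulr_natl; move=> h; exact: h.
have Ku : K * K^-1 = 1 by rewrite mulfV // gt_eqF.
have l1 : lo <= K^-1 by rewrite -(ler_pM2l K0) Ku.
have l2 : K^-1 <= lo + (1 - 2 * cc) ^+ k by rewrite -(ler_pM2l K0) Ku.
have /andP[l3 l4] := Hlo y.
rewrite ler_norml; apply/andP; split; lra.
Qed.

End Coding.

Section Groups.
Variable G : groupType.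
Implicit Types (N : set G) (g h : G).

Lemma grp1 (a b c : G) : ((a * b^-1)^-1 * (a * c^-1))%g = (b * c^-1)%g.
Proof. by rewrite invgM invgK -mulgA mulKg. Qed.

Lemma grp3 (a b c : G) : ((a * b^-1) * (c * b^-1)^-1)%g = (a * c^-1)%g.
Proof. by rewrite invgM invgK mulgA mulgVK. Qed.

Lemma coset_code N m : normal_subgroup N -> has_index N m ->
  exists c : G -> 'I_m, (forall g h, c g = c h <-> N (g * h^-1)%g) /\
                        (forall i, exists g, c g = i).
Proof.
move=> [N1 NM NV _] [reps [sz cov dis]].
have ex : forall g, exists i : 'I_m, N (g * (nth 1%g reps i)^-1)%g.
  move=> g; have [r rin Nr] := cov g.
  have im : (index r reps < m)%N by rewrite -sz index_mem.
  by exists (Ordinal im); rewrite /= nth_index.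
pose c g := proj1_sig (cid (ex g)).
have cP : forall g, N (g * (nth 1%g reps (c g))^-1)%g.
  by move=> g; exact: (proj2_sig (cid (ex g))).
exists c; split.
  move=> g h; split.
    move=> e; have := NM _ _ (cP g) (NV _ (cP h)).
    by rewrite e grp3.
  move=> Ngh; apply: val_inj; apply: dis; rewrite ?ltn_ord //.
  have := NM _ _ (NM _ _ (NV _ (cP g)) Ngh) (cP h).
  by rewrite grp1 -mulgA mulKg.
move=> i; exists (nth 1%g reps i); apply: val_inj; apply: esym; apply: dis; rewrite ?ltn_ord //; exact: cP.
Qed.

Lemma index_le N m m' : normal_subgroup N -> has_index N m -> has_index N m' -> (m <= m')%N.
Proof.
move=> nN hm hm'.
have [c [cE cS]] := coset_code nN hm; have [c' [cE' cS']] := coset_code nN hm'.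
pose gi (i : 'I_m) := proj1_sig (cid (cS i)).
have giP : forall i, c (gi i) = i by move=> i; exact: (proj2_sig (cid (cS i))).
have inj : injective (fun i => c' (gi i)).
  by move=> i j /cE' /cE; rewrite !giP.
by have := leq_card _ inj; rewrite !card_ord.
Qed.

Lemma index_uniq N m m' : normal_subgroup N -> has_index N m -> has_index N m' -> m = m'.
Proof. by move=> nN h h'; apply/eqP; rewrite eqn_leq !(index_le nN) . Qed.

Lemma Lambda_normal k : (1 < k)%N -> normal_subgroup (@Lambda G k).
Proof.
move=> k1; rewrite /Lambda ifN -?ltnNge //; split.
- by move=> /= N m [].
- move=> x y /= Hx Hy N m nN hN hm; case: (nN) => _ NM _ _; apply: NM.
    exact: (Hx N m). 
  exact: (Hy N m).
- move=> x /= Hx N m nN hN hm; case: (nN) => _ _ NV _; apply: NV; exact: (Hx N m).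
- move=> x g /= Hx N m nN hN hm; case: (nN) => _ _ _ NC; apply: NC; exact: (Hx N m).
Qed.

Lemma Lambda_sub k N m : (1 < k)%N -> normal_subgroup N -> has_index N m -> (m <= k)%N ->
  forall g, @Lambda G k g -> N g.
Proof. by move=> k1 nN hN hm g; rewrite /Lambda ifN -?ltnNge // => /(_ N m nN hN hm). Qed.

Lemma has_index_pos N m : has_index N m -> (0 < m)%N.
Proof.
move=> [reps [sz cov _]]; have [r rin _] := cov 1%g.
by rewrite -sz; case: reps rin {sz cov}.
Qed.

Lemma has_index_1 N : normal_subgroup N -> has_index N 1 -> forall g, N g.
Proof.
move=> [N1 NM NV _] [reps [sz cov _]] g.
case: reps sz cov => [|r [|? ?]] //= _ cov.
have [r1 r1in N1r] := cov 1%g; have [r2 r2in N2r] := cov g.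
move: r1in r2in N1r N2r; rewrite !inE => /eqP -> /eqP ->.
rewrite mul1g => /NV; rewrite invgK => Nr N2r.
by have := NM _ _ N2r Nr; rewrite mulgVK.
Qed.

Lemma count_lb (P : nat -> bool) d : (2 <= d)%N -> (forall k, (2 <= k)%N -> P k -> (k < d)%N) ->
  forall K, (2 + \sum_(2 <= k < K) P k <= d)%N.
Proof.
move=> d2 HP K.
suff : (\sum_(2 <= k < K) P k <= minn K d - 2)%N by move=> h; lia.
elim: K => [|K IH]; first by rewrite big_geq.
have [K2|K2] := leqP 2 K; last by rewrite big_geq.
rewrite big_nat_recr //=.
case PK: (P K); last by rewrite addn0; lia.
have := HP K K2 PK; lia.
Qed.

Lemma DG_spec g : residually_finite G -> g <> 1%g ->
  Dcand g (DG g).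
Proof.
move=> rf g1.
have ex : exists m, `[< Dcand g m >].
  have [N [nN [m hm] Ng]] := rf g g1.
  by exists m; apply/asboolP; exists N.
have [m0 Pm0 minm0] := find_ex_minn ex.
rewrite /DG asboolF //.
have := @xgetPex _ 0%N [set m | Dcand g m /\ (forall m', Dcand g m' -> (m <= m')%N)] _.
  case=> //.
exists m0; split; first exact/asboolP.
by move=> m' hm'; apply: minm0; apply/asboolP.
Qed.

Lemma DG_lb g K : residually_finite G -> g <> 1%g ->
  (2 + \sum_(2 <= k < K) `[< @Lambda G k g >] <= DG g)%N.
Proof.
move=> rf g1; have [N [nN hN Ng]] := DG_spec rf g1.
apply: count_lb.
  have := has_index_pos hN; case: (DG g) hN => [|[|d]] //= hN _.
  by have := has_index_1 nN hN g.
move=> k k2 /asboolP Lk; rewrite ltnNge; apply/negP => dk.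
by apply: Ng; apply: (Lambda_sub k2 nN hN dk).
Qed.

Lemma distinct_elems : infinite_set [set: G] -> forall k, exists s : seq G, uniq s /\ size s = k.
Proof.
move=> inf; elim=> [|k [s [us ss]]]; first by exists [::].
have [g gs] : exists g : G, g \notin s.
  apply: contrapT => H; apply: inf; apply: sub_finite_set (finite_seq s) => g _ /=.
  apply: contrapT => gn; apply: H; exists g; exact/negP.
by exists (g :: s); rewrite /= gs us ss.
Qed.

Definition sep_code (Om : finType) (phi : G -> Om) :=
  forall g h (s : G), phi g = phi h -> phi (g * s)%g = phi (h * s)%g.

Lemma sep_exists : residually_finite G -> forall ps : seq (G * G),
  (forall p, p \in ps -> p.1 <> p.2) ->
  exists (Om : finType) (phi : G -> Om), sep_code phi /\ forall p, p \in ps -> phi p.1 <> phi p.2.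
Proof.
move=> rf; elim=> [|p ps IH] hps.
  by exists unit, (fun=> tt); split.
have [|Om [phi [sphi hphi]]] := IH.
  by move=> q qin; apply: hps; rewrite in_cons qin orbT.
have p12 : (p.1 * p.2^-1)%g <> 1%g.
  move=> e; apply: (hps p); first by rewrite in_cons eqxx.
  exact: divg1_eq.
have [N [nN [m hm] Np]] := rf _ p12.
have [c [cE cS]] := coset_code nN hm.
exists (Om * 'I_m)%type, (fun g => (phi g, c g)); split.
  move=> g h s [e1 e2]; congr (_, _); first exact: sphi.
  by apply/cE; rewrite invgM mulgA mulgK; apply/cE.
move=> q; rewrite in_cons => /orP[/eqP ->|qin] [e1 e2].
  by apply: Np; apply/cE.
exact: (hphi q qin).
Qed.

Lemma restrict_code (Om : finType) (phi : G -> Om) :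
  exists (Om' : finType) (phi' : G -> Om'),
    (forall g h, phi' g = phi' h <-> phi g = phi h) /\ (forall y, exists g, phi' g = y).
Proof.
pose P := fun x : Om => `[< exists g, phi g = x >].
have PP : forall g, P (phi g) by move=> g; apply/asboolP; exists g.
exists {x : Om | P x}, (fun g => exist _ (phi g) (PP g)); split.
  by move=> g h; split => [[]|e] //; apply: val_inj.
move=> [x Px]; have /asboolP [g e] := Px.
by exists g; apply: val_inj.
Qed.

End Groups.

Section Main.
Variables (R : realType) (G : groupType) (S : seq G).
Hypothesis Ginf : infinite_set [set: G].
Hypothesis rf : residually_finite G.
Hypothesis Ssym : forall s, s \in S -> (s^-1)%g \in S.
Hypothesis Sgen : forall g : G, exists w : seq G, all (mem S) w /\ g = foldr mul 1%g w.
Hypothesis S0 : (0 < size S)%N.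

Definition pE n : R := E S n (fun g => (g == 1%g)%:R).
Definition qE k n : R := E S n (fun g => (`[< @Lambda G k g >] : bool)%:R).

Lemma E_ge0 n (f : G -> R) : (forall g, 0 <= f g) -> 0 <= E S n f.
Proof.
move=> f0; have -> : (0 : R) = E S n (fun _ => 0 * 1) by rewrite E_scale mul0r.
by apply: E_le => g; rewrite mul0r.
Qed.

Lemma p_lim (e : R) : 0 < e -> exists N, forall n, (N <= n)%N -> pE n <= e.
Proof.
move=> e0.
pose k := (Num.trunc (2 / e)).+1.
have k0 : (0 < k)%N by [].
have hk : (k%:R : R)^-1 <= e / 2.
  have := truncnS_gt (2 / e); rewrite -/k => h.
  have kp : 0 < (k%:R : R) by rewrite ltr0n.
  rewrite ltr_pdivrMr // in h.
  rewrite -[X in X <= _]mulr1 ler_pdivrMl //; lra.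
have [s [us ss]] := distinct_elems Ginf k.
pose ps := [seq p <- [seq (a, b) | a <- s, b <- s] | p.1 != p.2].
have hps : forall p, p \in ps -> p.1 <> p.2.
  by move=> p; rewrite mem_filter => /andP[/eqP].
have [Om [phi [sphi hphi]]] := sep_exists rf hps.
have [Om' [phi' [fib surj]]] := restrict_code phi.
have compat : forall g h (j : 'I_(size S)),
    phi' g = phi' h -> phi' (g * nth 1%g S j)%g = phi' (h * nth 1%g S j)%g.
  by move=> g h j /fib e1; apply/fib; apply: sphi.
have e20 : 0 < e / 2 by rewrite divr_gt0.
have [N HN] := v_lim Ssym Sgen S0 compat surj (phi' 1%g) e20.
exists N => n hn; have := HN n hn.
have inj : {in s &, injective phi'}.
  move=> a b ain bin /fib eab; apply/eqP; apply: contraT => nab.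
  have : (a, b) \in ps by rewrite mem_filter /= nab; apply: allpairs_f.
  by move/hphi.
have kO : (k <= #|Om'|)%N.
  have um : uniq (map phi' s) by rewrite (map_inj_in_uniq inj).
  rewrite -ss -(size_map phi') -(card_uniqP um); exact: max_card.
have hO : ((#|Om'|%:R : R))^-1 <= (k%:R)^-1.
  by rewrite lef_pV2 ?posrE ?ltr0n ?ler_nat // (leq_trans k0).
have : pE n <= v R S phi' n (phi' 1%g).
  apply: E_le => g; case: (g =P 1%g) => [->|_]; first by rewrite eqxx.
  by case: (_ == _).
move=> h1 h2; rewrite ler_norml in h2; case/andP: h2 => _ h2; lra.
Qed.

Lemma q_lim k (e : R) : (1 < k)%N -> 0 < e -> exists N, forall n, (N <= n)%N ->
  ((gindex (@Lambda G k))%:R^-1 - e <= qE k n).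
Proof.
move=> k1 e0.
case: (pselect (exists m, has_index (@Lambda G k) m)) => [[m hm]|nm]; last first.
  exists 0%N => n _; rewrite /gindex xgetPN; last by move=> m hm; apply: nm; exists m.
  rewrite invr0 sub0r; apply: le_trans (_ : 0 <= _); first by rewrite oppr_le0 ltW.
  by apply: E_ge0 => g.
have nL := Lambda_normal G k1.
have gi : gindex (@Lambda G k) = m.
  rewrite /gindex; apply: (index_uniq nL) => //; exact: (xgetPex 0%N (ex_intro _ m hm)).
have [c [cE cS]] := coset_code nL hm.
have compat : forall g h (j : 'I_(size S)),
    c g = c h -> c (g * nth 1%g S j)%g = c (h * nth 1%g S j)%g.
  by move=> g h j /cE e1; apply/cE; rewrite invgM mulgA mulgK.
have [N HN] := v_lim Ssym Sgen S0 compat cS (c 1%g) e0.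
exists N => n hn; have := HN n hn; rewrite card_ord gi.
have -> : v R S c n (c 1%g) = qE k n.
  apply: E_ext => g.
  have hiff : c g = c 1%g <-> @Lambda G k g by rewrite cE invg1 mulg1.
  case: asboolP => h; first by rewrite (introT eqP (proj2 hiff h)).
  by rewrite (introF eqP (fun e1 => h (proj1 hiff e1))).
by rewrite ler_norml => /andP[h _]; lra.
Qed.

Lemma finite_eventually (P : nat -> nat -> Prop) :
  (forall k, exists N, forall n, (N <= n)%N -> P k n) ->
  forall K, exists N, forall n, (N <= n)%N -> forall k, (k < K)%N -> P k n.
Proof.
move=> H; elim=> [|K [N HN]]; first by exists 0%N.
have [N' HN'] := H K; exists (maxn N N') => n hn k kK.
have [kK'|kK'] := ltnP k K.
  by apply: HN => //; apply: leq_trans hn; rewrite leq_maxl.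
have -> : k = K by apply/eqP; rewrite eqn_leq kK'; rewrite ltnS in kK; rewrite kK.
by apply: HN'; apply: leq_trans hn; rewrite leq_maxr.
Qed.

Lemma D_pointwise K g :
  2 * (1 - (g == 1%g)%:R) + \sum_(2 <= k < K) ((`[< @Lambda G k g >] : bool)%:R - (g == 1%g)%:R)
  <= ((DG g)%:R : R).
Proof.
case: (g =P 1%g) => [->|g1] /=.
  rewrite subrr mulr0 add0r; apply: le_trans (_ : 0 <= _); last exact: ler0n.
  by rewrite sumr_le0 // => k _; rewrite subr_le0; case: (asbool _).
rewrite subr0 mulr1 (eq_bigr (fun k => (`[< @Lambda G k g >] : bool)%:R)); last by move=> k _; rewrite subr0.
have := DG_lb K rf g1; rewrite -(ler_nat R) natrD natr_sum.
by move=> h; apply: le_trans h.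
Qed.

End Main.

Unset Implicit Arguments.

Theorem proposition4p1 (R : realType) (G : groupType) (S : seq G) :
  infinite_set [set: G] ->
  residually_finite G ->
  symmetric_gen_set S ->
  ((2%:E + \sum_(2 <= k <oo) ((gindex (@Lambda G k))%:R^-1 : R)%:E)
     <= limn_einf (fun n => (expected_DG R S n)%:E))%E.
Proof.
move=> Ginf rf [Suniq Ssym Sgen].
have S0 : (0 < size S)%N.
  move: Ssym Sgen {Suniq}; case: S => [|s S'] // _ Sgen; exfalso; apply: Ginf.
  apply: sub_finite_set (finite_seq [:: 1%g]) => g _ /=.
  have [w [hw ->]] := Sgen g.
  by case: w hw => [|a w] //=; rewrite inE.
apply: final_ereal; first by move=> k; rewrite invr_ge0 ler0n.
move=> K e e0.
pose e' := e / (2 * K%:R + 2).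
have D0 : 0 < 2 * K%:R + 2 :> R by apply: ltr_wpDl; rewrite ?mulr_ge0 ?ler0n.
have e'0 : 0 < e' by rewrite divr_gt0.
have ee' : e = e' * (2 * K%:R + 2) by rewrite /e' mulfVK ?gt_eqF.
have [Np Hp] := p_lim Ginf rf Ssym Sgen S0 e'0.
have hP : forall k, exists N, forall n, (N <= n)%N ->
    (2 <= k)%N -> (gindex (@Lambda G k))%:R^-1 - e' <= qE R S k n.
  move=> k; case: (ltnP 1 k) => k1.
    by have [N HN] := q_lim Ssym Sgen S0 k1 e'0; exists N => n hn _; apply: HN.
  by exists 0%N => n _ k2; exfalso; move: k1; rewrite leqNgt; move/negP; apply.
have [Nq Hq] := @finite_eventually
   (fun k n => (2 <= k)%N -> (gindex (@Lambda G k))%:R^-1 - e' <= qE R S k n) hP K.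
exists (maxn Np Nq) => n hn.
have hp : pE R S n <= e' by apply: Hp; exact: leq_trans (leq_maxl _ _) hn.
have hq : forall k, (2 <= k < K)%N -> (gindex (@Lambda G k))%:R^-1 - e' <= qE R S k n.
  move=> k /andP[k2 kK]; apply: Hq => //; exact: leq_trans (leq_maxr _ _) hn.
rewrite /= expected_E.
apply: le_trans (E_le S n (D_pointwise R rf K)).

rewrite E_add E_scale (E_sub S n (fun _ => 1) (fun g => (g == 1%g)%:R)) E1 // E_sum.

have hsum : \sum_(2 <= k < K) ((gindex (@Lambda G k))%:R^-1 - 2 * e')
    <= \sum_(2 <= k < K) E S n (fun g => (`[< @Lambda G k g >] : bool)%:R - (g == 1%g)%:R).
  rewrite big_nat_cond [X in _ <= X]big_nat_cond; apply: ler_sum => k /andP[hk _].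
  rewrite E_sub; have := hq k hk; rewrite /qE /pE in hp *; lra.
have hK : \sum_(2 <= k < K) (2 * e') <= K%:R * (2 * e').
  by rewrite sumr_const_nat -[2 * e' *+ _]mulr_natl ler_pM2r ?mulr_gt0 // ler_nat leq_subr.
move: hsum; rewrite sumrB => hsum.
rewrite /pE in hp.
lra.
Qed.
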